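(* Let $A \in \mathbb{R}^{m\times n}$, $b \in \mathbb{R}^m$, $x_0 \in \mathbb{R}^n$, and run the F-AB-GMRES process described in the context with arbitrary vectors $z_1,z_2,\dots \in\mathbb{R}^n$. Assume that $\beta = \|r_0\|_2 \neq 0$ and that $k-1$ steps have been successfully performed, i.e. $h_{i+1,i}\neq 0$ for all $i<k$. Assume in addition that the matrix $H_k$ is nonsingular. Then $x_k$ is a solution of $Ax=b$ if and only if $h_{k+1,k}=0$.
   Context: Flexible AB-GMRES (F-AB-GMRES). Given $A \in \mathbb{R}^{m\times n}$, $b\in\mathbb{R}^m$ and an initial vector $x_0\in\mathbb{R}^n$, set $r_0 = b - A x_0$, $\beta = \|r_0\|_2$, $v_1 = r_0/\beta$. For $k = 1,2,\dots$: choose a vector $z_k \in \mathbb{R}^n$ (in the paper, $z_k = B^{(\ell_k)} v_k$ is the result of applying $\ell_k$ steps of a Kaczmarz-type iteration, possibly randomized or greedy, to $Az = v_k$, so the map $v_k \mapsto z_k$ may change with $k$; the results hold for arbitrary $z_k$); set $w_k = A z_k$; for $i = 1,\dots,k$ set $h_{i,k} = w_k^{\mathsf T} v_i$ and then $w_k \leftarrow w_k - h_{i,k} v_i$; set $h_{k+1,k} = \|w_k\|_2$ and, if $h_{k+1,k}\neq 0$, $v_{k+1} = w_k/h_{k+1,k}$. Let $Z_k = [z_1,\dots,z_k] \in \mathbb{R}^{n\times k}$, $V_k = [v_1,\dots,v_k]\in\mathbb{R}^{m\times k}$, let $\bar H_k = \{h_{i,j}\}_{1\le i\le k+1,\,1\le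 j\le k} \in \mathbb{R}^{(k+1)\times k}$ (upper Hessenberg, with $h_{i,j}=0$ for $i>j+1$), and let $H_k$ be the $k\times k$ matrix obtained from $\bar H_k$ by deleting its last row. The $k$th iterate is $x_k = x_0 + Z_k y_k$, where $y_k = \arg\min_{y\in\mathbb{R}^k}\|\beta e_1 - \bar H_k y\|_2$ and $e_1$ is the first column of the $(k+1)\times(k+1)$ identity matrix. *)

(* Defs.v *)
(* F-AB-GMRES (flexible AB-GMRES) process, Arnoldi part
   with modified Gram-Schmidt, stated over an arbitrary real closed field R
   (this includes the real numbers). *)
From HB Require Import structures.
From mathcomp Require Import all_boot all_order all_algebra.
Set Implicit Arguments. Unset Strict Implicit. Unset Printing Implicit Defensive.
Import Order.TTheory GRing.Theory Num.Theory.
Local Open Scope ring_scope.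

Section FABGMRES.
Variable R : rcfType.

Definition norm2 {p : nat} (v : 'cV[R]_p) : R :=
  Num.sqrt (\sum_(i < p) v i 0 ^+ 2).

Definition dotv {p : nat} (w v : 'cV[R]_p) : R := (w^T *m v) 0 0.

Fixpoint mgs {p : nat} (vs : seq 'cV[R]_p) (w : 'cV[R]_p) : seq R * 'cV[R]_p :=
  match vs with
  | [::] => ([::], w)
  | v :: vs' =>
      let h := dotv w v in
      let r := mgs vs' (w - h *: v) in
      (h :: r.1, r.2)
  end.

Variables (m n : nat) (A : 'M[R]_(m, n)) (b : 'cV[R]_m) (x0 : 'cV[R]_n)
          (z : nat -> 'cV[R]_n).
(* z k is the vector z_k chosen at step k (k >= 1); z 0 is unused. *)

Definition r0 : 'cV[R]_m := b - A *m x0.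
Definition beta : R := norm2 r0.

(* basis k = [:: v_1; ...; v_(k+1)].  When h_(k+1,k) = 0 the vector
   v_(k+1) is set to 0 (w / 0 = 0); it is never used in that case. *)
Fixpoint basis (k : nat) : seq 'cV[R]_m :=
  match k with
  | 0 => [:: beta^-1 *: r0]
  | k'.+1 =>
      let vs := basis k' in
      let r := mgs vs (A *m z k) in
      rcons vs ((norm2 r.2)^-1 *: r.2)
  end.

Definition step (j : nat) : seq R * 'cV[R]_m := mgs (basis j.-1) (A *m z j).

(* Hessenberg entries h_(i,j), 1-based indices (i, j >= 1) *)
Definition hent (i j : nat) : R :=
  if (i <= j)%N then nth 0 (step j).1 i.-1
  else if (i == j.+1)%N then norm2 (step j).2
  else 0.

Definition Hbar (k : nat) : 'M[R]_(k.+1, k) := \matrix_(i < k.+1, j < k) hent i.+1 j.+1.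
Definition Hsq (k : nat) : 'M[R]_k := \matrix_(i < k, j < k) hent i.+1 j.+1.
Definition Zmat (k : nat) : 'M[R]_(n, k) := \matrix_(i < n, j < k) z j.+1 i 0.

Definition is_lsq_sol (k : nat) (y : 'cV[R]_k) : Prop :=
  forall y' : 'cV[R]_k,
    norm2 (beta *: delta_mx 0 0 - Hbar k *m y) <=
    norm2 (beta *: delta_mx 0 0 - Hbar k *m y').

Definition iterate (k : nat) (y : 'cV[R]_k) : 'cV[R]_n := x0 + Zmat k *m y.

End FABGMRES.

(* Main.v *)
Require Import Defs.
From HB Require Import structures.
From mathcomp Require Import all_boot all_order all_algebra zify.
Import Order.TTheory GRing.Theory Num.Theory.
Local Open Scope ring_scope.
Set Implicit Arguments. Unset Strict Implicit. Unset Printing Implicit Defensive.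

Section H.
Variable R : rcfType.

Lemma dotvE p (w v : 'cV[R]_p) : dotv w v = \sum_i w i 0 * v i 0.
Proof. by rewrite /dotv mxE; apply: eq_bigr => i _; rewrite mxE. Qed.
Lemma dotvC p (w v : 'cV[R]_p) : dotv w v = dotv v w.
Proof. by rewrite !dotvE; apply: eq_bigr => i _; rewrite mulrC. Qed.
Lemma dotvBl p (a c v : 'cV[R]_p) : dotv (a - c) v = dotv a v - dotv c v.
Proof. by rewrite !dotvE -sumrB; apply: eq_bigr => i _; rewrite !mxE mulrBl. Qed.
Lemma dotvZl p x (a v : 'cV[R]_p) : dotv (x *: a) v = x * dotv a v.
Proof. by rewrite !dotvE mulr_sumr; apply: eq_bigr => i _; rewrite !mxE mulrA. Qed.
Lemma dotv_suml p q (F : 'I_q -> 'cV[R]_p) v :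
  dotv (\sum_(i < q) F i) v = \sum_(i < q) dotv (F i) v.
Proof.
rewrite dotvE; under eq_bigr do rewrite summxE mulr_suml.
by rewrite exchange_big; apply: eq_bigr => i _; rewrite dotvE.
Qed.
Lemma dotvv p (w : 'cV[R]_p) : dotv w w = norm2 w ^+ 2.
Proof.
rewrite /norm2 sqr_sqrtr ?dotvE; last by apply: sumr_ge0 => i _; apply: sqr_ge0.
by apply: eq_bigr => i _; rewrite expr2.
Qed.
Lemma norm2_ge0 p (w : 'cV[R]_p) : 0 <= norm2 w.
Proof. exact: sqrtr_ge0. Qed.
Lemma norm2_eq0 p (w : 'cV[R]_p) : norm2 w = 0 -> w = 0.
Proof.
move=> /eqP; rewrite /norm2 sqrtr_eq0 => H.
have H0 : \sum_(i < p) w i 0 ^+ 2 = 0.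
  by apply/eqP; rewrite eq_le H sumr_ge0 // => i _; apply: sqr_ge0.
apply/matrixP => i j; rewrite mxE (ord1 j).
have /(_ i isT) /eqP := psumr_eq0P (fun i _ => sqr_ge0 (w i 0)) H0.
by rewrite sqrf_eq0 => /eqP.
Qed.

Lemma mgs_size p (vs : seq 'cV[R]_p) w : size (mgs vs w).1 = size vs.
Proof. by elim: vs w => //= v vs IH w; rewrite IH. Qed.

Lemma mgs_dec p (vs : seq 'cV[R]_p) w :
  (mgs vs w).2 = w - \sum_(i < size vs) nth 0 (mgs vs w).1 i *: nth 0 vs i.
Proof.
elim: vs w => [|v vs IH] w /=; first by rewrite big_ord0 subr0.
by rewrite IH big_ord_recl /= opprD addrA.
Qed.

Definition ON p (vs : seq 'cV[R]_p) := forall i j, (i < size vs)%N -> (j < size vs)%N ->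
  dotv (nth 0 vs i) (nth 0 vs j) = (i == j)%:R.

Lemma mgs_orth p (vs : seq 'cV[R]_p) w : ON vs ->
  forall i, (i < size vs)%N -> dotv (mgs vs w).2 (nth 0 vs i) = 0.
Proof.
elim: vs w => [|v vs IH] w //= Hon [|i] Hi /=.
- rewrite mgs_dec dotvBl dotv_suml big1 ?subr0.
    by rewrite dotvBl dotvZl (Hon 0%N 0%N) // mulr1 subrr.
  move=> j _; rewrite dotvZl (Hon j.+1 0%N) //= ?mulr0 //.
  by rewrite ltnS (leq_trans (ltn_ord j)) // mgs_size.
- apply: IH => // a c Ha Hc; exact: (Hon a.+1 c.+1).
Qed.

Lemma ON_rcons p (vs : seq 'cV[R]_p) u : ON vs ->
  (forall i, (i < size vs)%N -> dotv (nth 0 vs i) u = 0) -> dotv u u = 1 ->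
  ON (rcons vs u).
Proof.
move=> Hon Ho Hu i j; rewrite size_rcons !ltnS !nth_rcons => Hi Hj.
case: (ltngtP i (size vs)) Hi => [Hi'|Hi'|->] Hi.
- case: (ltngtP j (size vs)) Hj => [Hj'|Hj'|->] Hj.
  + exact: Hon.
  + by [].
  + by rewrite Ho // (ltn_eqF Hi').
- by [].
- case: (ltngtP j (size vs)) Hj => [Hj'|Hj'|] Hj.
  + by rewrite dotvC Ho // (gtn_eqF Hj').
  + by [].
  + by rewrite Hu.
Qed.

Lemma dotvZr p x (a v : 'cV[R]_p) : dotv a (x *: v) = x * dotv a v.
Proof. by rewrite dotvC dotvZl dotvC. Qed.

Lemma norm20 p : norm2 (0 : 'cV[R]_p) = 0.
Proof. by rewrite /norm2 big1 ?sqrtr0 // => i _; rewrite mxE expr0n. Qed.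

Variables (m n : nat) (A : 'M[R]_(m, n)) (b : 'cV[R]_m) (x0 : 'cV[R]_n)
          (z : nat -> 'cV[R]_n).

Notation bs := (basis A b x0 z).
Notation hh := (hent A b x0 z).
Notation st := (step A b x0 z).

Lemma size_basis k : size (bs k) = k.+1.
Proof. by elim: k => //= k IH; rewrite size_rcons IH. Qed.

Lemma basis_prefix k j i : (j <= k)%N -> (i <= j)%N -> nth 0 (bs k) i = nth 0 (bs j) i.
Proof.
elim: k => [|k IH]; first by rewrite leqn0 => /eqP ->.
rewrite leq_eqVlt => /orP [/eqP -> //|]; rewrite ltnS => Hjk Hij.
rewrite /= nth_rcons size_basis ltnS (leq_trans Hij Hjk); exact: IH.
Qed.

Lemma hent_sub j : hh j.+1 j = norm2 (st j).2.
Proof. by rewrite /hent ltnn eqxx. Qed.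
Lemma hent_low i j : (j.+1 < i)%N -> hh i j = 0.
Proof.
move=> H; rewrite /hent leqNgt (ltn_trans (ltnSn j) H) /=.
by rewrite gtn_eqF.
Qed.
Lemma hent_up i j : (i <= j)%N -> hh i j = nth 0 (st j).1 i.-1.
Proof. by move=> H; rewrite /hent H. Qed.

Lemma basis_last j : nth 0 (bs j.+1) j.+1 = (norm2 (st j.+1).2)^-1 *: (st j.+1).2.
Proof. by rewrite /= nth_rcons size_basis ltnn eqxx. Qed.

Lemma col_rel k j : (j < k)%N ->
  A *m z j.+1 = \sum_(i < k.+1) hh i.+1 j.+1 *: nth 0 (bs k) i.
Proof.
move=> Hjk.
have Hd := mgs_dec (bs j) (A *m z j.+1).
rewrite size_basis in Hd.
have -> : A *m z j.+1 = \sum_(i < j.+1) nth 0 (st j.+1).1 i *: nth 0 (bs j) i + (st j.+1).2.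
  by rewrite /step /= Hd addrC subrK.
have Hw : (st j.+1).2 = hh j.+2 j.+1 *: nth 0 (bs k) j.+1.
  rewrite (basis_prefix (j := j.+1)) // basis_last hent_sub scalerA.
  have [H0|H0] := eqVneq (norm2 (st j.+1).2) 0.
    by rewrite H0 mul0r scale0r; apply: norm2_eq0.
  by rewrite mulfV // scale1r.
pose F i := hh i.+1 j.+1 *: nth 0 (bs k) i.
have -> : \sum_(i < k.+1) hh i.+1 j.+1 *: nth 0 (bs k) i = \sum_(i < k.+1) F i by [].
have -> : \sum_(i < k.+1) F i = \sum_(i < j.+2) F i.
  rewrite (@big_ord_widen _ _ _ j.+2 k.+1 F) // [RHS]big_mkcond; apply: eq_bigr => i _.
  case: ifP => // /negbT; rewrite -leqNgt => Hi.
  by rewrite /F hent_low ?scale0r.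
rewrite [RHS]big_ord_recr /= Hw; congr (_ + _).
apply: eq_bigr => i _; rewrite /F hent_up //= (basis_prefix (k := k) (j := j)) //.
  exact: ltnW.
exact: (ltn_ord i).
Qed.

Lemma ON_basis j : beta A b x0 != 0 ->
  (forall i, (1 <= i <= j)%N -> hh i.+1 i != 0) -> ON (bs j).
Proof.
move=> Hb; elim: j => [|j IH] Hh.
  case=> [|i] [|c] //= _ _.
  rewrite dotvZl dotvZr dotvv -/(beta A b x0) mulrA -expr2 -exprMn mulVf //.
  by rewrite expr1n.
have IH' : ON (bs j).
  by apply: IH => i /andP [H1 H2]; apply: Hh; rewrite H1 (leqW H2).
have HN : norm2 (st j.+1).2 != 0.
  by rewrite -hent_sub; apply: Hh; rewrite /=.
rewrite /=; apply: ON_rcons => //.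
  move=> i Hi; rewrite dotvZr dotvC mgs_orth ?mulr0 //.
rewrite dotvZl dotvZr dotvv mulrA -expr2 -exprMn.
by rewrite /step /= in HN; rewrite mulVf // expr1n.
Qed.

Definition Vm k : 'M[R]_(m, k.+1) := \matrix_(i < m, j < k.+1) nth 0 (bs k) j i 0.

Lemma AZ k : A *m Zmat z k = Vm k *m Hbar A b x0 z k.
Proof.
apply/matrixP => r j.
have := congr1 (fun M : 'cV[R]_m => M r 0) (col_rel (ltn_ord j)).
rewrite /= !mxE summxE => E.
have -> : \sum_j0 A r j0 * Zmat z k j0 j = \sum_j0 A r j0 * z j.+1 j0 0.
  by apply: eq_bigr => i _; rewrite !mxE.
rewrite E; apply: eq_bigr => i _; by rewrite !mxE mulrC.
Qed.

Lemma res k (y : 'cV[R]_k) : beta A b x0 != 0 ->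
  b - A *m iterate x0 z y = Vm k *m (beta A b x0 *: delta_mx 0 0 - Hbar A b x0 z k *m y).
Proof.
move=> Hb.
have HV : Vm k *m (beta A b x0 *: delta_mx 0 0) = r0 A b x0.
  rewrite -scalemxAr -colE; apply/matrixP => r c; rewrite (ord1 c) !mxE.
  rewrite (basis_prefix (k := k) (j := 0)) //= !mxE mulrA mulfV // mul1r.
  by [].
rewrite /iterate (mulmxDr A) mulmxA AZ -mulmxA (mulmxBr (Vm k)) HV /r0 opprD addrA.
done.
Qed.

Lemma VtV k : ON (bs k) -> (Vm k)^T *m Vm k = 1%:M.
Proof.
move=> Hon; apply/matrixP => i j; rewrite !mxE.
rewrite -(Hon i j) ?size_basis // dotvE.
by apply: eq_bigr => l _; rewrite !mxE.
Qed.
End H.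

Theorem theorem3p2 (R : rcfType) (m n : nat) (A : 'M[R]_(m, n))
  (b : 'cV[R]_m) (x0 : 'cV[R]_n) (z : nat -> 'cV[R]_n) (k : nat) :
  (0 < k)%N ->
  beta A b x0 != 0 ->
  (forall i : nat, (1 <= i < k)%N -> hent A b x0 z i.+1 i != 0) ->
  Hsq A b x0 z k \in unitmx ->
  forall y : 'cV[R]_k, is_lsq_sol A b x0 z y ->
    (A *m iterate x0 z y = b <-> hent A b x0 z k.+1 k = 0).
Proof.
move=> Hk Hb Hh Hunit y Hy.
have Hr := @res R m n A b x0 z k y Hb.
split.
- move=> Hx; apply/eqP; apply: contraT => Hne.
  have Hon : ON (basis A b x0 z k).
    apply: ON_basis => // i /andP [H1 H2].
    case: (ltngtP i k) H2 => [Hik|//|->] _; last exact: Hne.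
    by apply: Hh; rewrite H1 Hik.
  have Hu0 : beta A b x0 *: delta_mx 0 0 - Hbar A b x0 z k *m y = 0.
    have HVu : Vm A b x0 z k *m (beta A b x0 *: delta_mx 0 0 - Hbar A b x0 z k *m y) = 0.
      by rewrite -Hr Hx subrr.
    by rewrite -(mul1mx (_ - _)) -(VtV Hon) -mulmxA HVu mulmx0.
  have HE : forall i : 'I_k.+1,
      \sum_(j < k) hent A b x0 z i.+1 j.+1 * y j 0 = beta A b x0 * (i == 0 :> nat)%:R.
    move=> i; have := congr1 (fun M : 'cV[R]_k.+1 => M i 0) Hu0; rewrite /Hbar !mxE.
    under eq_bigr do rewrite mxE.
    by move/eqP; rewrite subr_eq0 => /eqP E; rewrite -E andbT.
  have Hy0 : forall d (j : 'I_k), (k - d <= j)%N -> y j 0 = 0.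
    elim=> [|d IH] j Hj; first by rewrite subn0 leqNgt ltn_ord in Hj.
    case: (leqP (k - d) j) => Hjd; first exact: IH.
    have Hj1 : j.+1 = (k - d)%N by lia.
    have := HE (lift ord0 j); rewrite lift0 (bigD1 j) //= big1 ?addr0 ?mulr0.
      move/eqP; rewrite mulf_eq0 => /orP [|/eqP //].
      have [Hjk|Hjk] := ltnP j.+1 k.
        by move: (Hh j.+1); rewrite Hjk => /(_ isT) /negbTE ->.
      have Hjk' : j.+1 = k by apply/eqP; rewrite eqn_leq Hjk (ltn_ord j).
      by rewrite Hjk' (negbTE Hne).
    move=> j' Hj'.
    case: (ltngtP j' j) => [Hlt|Hgt|Heq].
    - by rewrite hent_low ?mul0r // ltnS.
    - by rewrite (IH j') ?mulr0 // -Hj1.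
    - by move: Hj'; rewrite -val_eqE /= Heq eqxx.
  have := HE ord0; rewrite big1 => [|j _]; last by rewrite (Hy0 k) ?subnn // mulr0.
  by move/eqP; rewrite /= mulr1 eq_sym (negbTE Hb).
- move=> H0.
  pose e : 'cV[R]_k := \matrix_(i < k, j < 1) (if val i == 0%N then beta A b x0 else 0).
  pose ys := invmx (Hsq A b x0 z k) *m e.
  have Hys : Hsq A b x0 z k *m ys = e by rewrite /ys mulmxA mulmxV // mul1mx.
  have Hbys : Hbar A b x0 z k *m ys = beta A b x0 *: delta_mx 0 0.
    apply/matrixP => i c; rewrite (ord1 c) /Hbar !mxE.
    under eq_bigr do rewrite mxE.
    case: (ltnP i k) => Hik.
    + have := congr1 (fun M : 'cV[R]_k => M (Ordinal Hik) 0) Hys.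
      rewrite /Hsq !mxE /=; under eq_bigr do rewrite mxE.
      move=> ->; rewrite andbT.
      by rewrite -val_eqE /=; case: ifP; rewrite ?mulr1 ?mulr0.
    + have Hik' : val i = k by apply/eqP; rewrite eqn_leq Hik -ltnS (ltn_ord i).
      rewrite big1 => [|j _].
        have -> : (i == 0) = false by rewrite -val_eqE /= Hik' gtn_eqF.
        by rewrite mulr0.
      rewrite Hik'; have [Hj|Hj] := ltnP j.+1 k.
        by rewrite hent_low ?mul0r // ltnS.
      have Hjk : j.+1 = k by apply/eqP; rewrite eqn_leq Hj (ltn_ord j).
      by rewrite Hjk H0 mul0r.
  have Hn : norm2 (beta A b x0 *: delta_mx 0 0 - Hbar A b x0 z k *m y) = 0.
    apply/eqP; rewrite eq_le norm2_ge0 andbT.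
    by have := Hy ys; rewrite Hbys subrr norm20.
  move: Hr; rewrite (norm2_eq0 Hn) mulmx0 => /eqP; rewrite subr_eq0 => /eqP <-.
  done.
Qed.
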